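(* Let $w$ be a word of length $n$ over a finite alphabet $\Sigma$, $\phi$ an antimorphic involution on $\Sigma^*$, and $k\ge 2$ an integer. For $1\le i\le\lfloor n/2\rfloor$ let $s_i$ be the binary string of length $n-2i+1$ with $s_i[\ell]=1$ if and only if $w[\ell\,..\,\ell+2i-1]$ is a pseudo square with respect to $\phi$. There is an algorithm that, given the strings $s_1,\dots,s_{\lfloor n/2\rfloor}$ and $k$ as input, finds all factors of $w$ that are pseudo $k$th powers with respect to $\phi$ (i.e., all occurrences, given by starting position and length), in time linear in $\sum_i|s_i|$.
   Context: $w[p\,..\,q]$ denotes the factor of $w$ from position $p$ to position $q$ (positions start at $1$). A function $\phi:\Sigma^*\to\Sigma^*$ is an antimorphic involution if $\phi(uv)=\phi(v)\phi(u)$ and $\phi(\phi(w))=w$. A nonempty word is a pseudo $k$th power with respect to $\phi$ if it equals $u_1\cdots u_k$ where for all $1\le i,j\le k$, $u_i=u_j$ or $u_i=\phi(u_j)$; a pseudo square is a pseudo $2$nd power. *)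

(* Defs.v *)
From Stdlib Require Import ClassicalEpsilon.
From mathcomp Require Import all_boot.
Set Implicit Arguments. Unset Strict Implicit. Unset Printing Implicit Defensive.

Definition bool_of (P : Prop) : bool :=
  if excluded_middle_informative P then true else false.

(* w[p..q], positions starting at 1. *)
Definition factor (S : Type) (w : seq S) (p q : nat) : seq S :=
  take (q.+1 - p) (drop p.-1 w).

Definition antimorphic_involution (S : Type) (phi : seq S -> seq S) : Prop :=
  (forall u v, phi (u ++ v) = phi v ++ phi u) /\ (forall x, phi (phi x) = x).

Definition pseudo_power (S : eqType) (phi : seq S -> seq S) (k : nat)
    (x : seq S) : Prop :=
  x <> [::] /\
  exists us : seq (seq S), size us = k /\ flatten us = x /\
    forall i j, i < k -> j < k ->
      nth [::] us i = nth [::] us j \/ nth [::] us i = phi (nth [::] us j).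

Definition pseudo_square (S : eqType) (phi : seq S -> seq S) (x : seq S) :=
  pseudo_power phi 2 x.

Definition s_of (S : eqType) (phi : seq S -> seq S) (w : seq S) (i : nat)
    : bitseq :=
  [seq bool_of (pseudo_square phi (factor w l (l + 2 * i - 1)))
  | l <- iota 1 (size w - 2 * i + 1)].

Definition all_s (S : eqType) (phi : seq S -> seq S) (w : seq S) : seq bitseq :=
  [seq s_of phi w i | i <- iota 1 (size w)./2].

Definition pseudo_power_occ (S : eqType) (phi : seq S -> seq S) (k : nat)
    (w : seq S) (p L : nat) : Prop :=
  [/\ 1 <= p, 1 <= L, p + L - 1 <= size w &
      pseudo_power phi k (factor w p (p + L - 1))].

Inductive instr : Type :=
  | IConst of nat & nat
  | IAdd of nat & nat & nat
  | ISub of nat & nat & nat  (* ISub r a b   : R[r] := R[a] - R[b] (truncated) *)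
  | ILoad of nat & nat
  | IStore of nat & nat
  | IJz of nat & nat
  | IJmp of nat
  | IHalt.

Record state : Type := State { pc : nat; reg : nat -> nat; mem : nat -> nat }.

Definition upd (f : nat -> nat) (x v : nat) : nat -> nat :=
  fun y => if y == x then v else f y.

Definition fetch (P : seq instr) (st : state) : instr := nth IHalt P (pc st).

Definition halted (P : seq instr) (st : state) : bool :=
  if fetch P st is IHalt then true else false.

(* One step (each instruction costs one unit of time). *)
Definition step (P : seq instr) (st : state) : state :=
  let: State c R M := st in
  match fetch P st with
  | IConst r n => State c.+1 (upd R r n) M
  | IAdd r a b => State c.+1 (upd R r (R a + R b)) M
  | ISub r a b => State c.+1 (upd R r (R a - R b)) M
  | ILoad r a => State c.+1 (upd R r (M (R a))) M
  | IStore a b => State c.+1 R (upd M (R a) (R b))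
  | IJz r l => State (if R r == 0 then l else c.+1) R M
  | IJmp l => State l R M
  | IHalt => st
  end.

Fixpoint run (P : seq instr) (t : nat) (st : state) : option state :=
  if halted P st then Some st else
  match t with
  | 0 => None
  | t'.+1 => run P t' (step P st)
  end.

(* Input encoding of (k, s_1, ..., s_h): memory cells
   M[0] = k, M[1] = h, M[2+2(i-1)] = start address of s_i,
   M[3+2(i-1)] = |s_i|, followed by the bits of s_1, ..., s_h (0/1). *)
Definition encode_input (k : nat) (ss : seq bitseq) : seq nat :=
  let h := size ss in
  [:: k, h & flatten [seq [:: 2 + 2 * h + sumn (map size (take i ss));
                             size (nth [::] ss i)] | i <- iota 0 h]]
  ++ map nat_of_bool (flatten ss).

Definition init_state (input : seq nat) : state :=
  State 0 (fun _ => 0) (fun a => nth 0 input a).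

(* Output convention: on halting, R[0] = number c of reported occurrences,
   R[1] = base address b; occurrence j < c is the pair
   (M[b+2j], M[b+2j+1]) = (starting position, length). *)
Definition output (st : state) : seq (nat * nat) :=
  [seq (mem st (reg st 1 + 2 * j), mem st (reg st 1 + 2 * j + 1))
  | j <- iota 0 (reg st 0)].

(* Main.v *)
Require Import Defs.
From Stdlib Require Import ClassicalEpsilon.
From mathcomp Require Import all_boot zify.
Set Implicit Arguments. Unset Strict Implicit. Unset Printing Implicit Defensive.

Definition Aof (ss : seq bitseq) i := 2 + 2 * size ss + sumn (take i (map size ss)).
Definition bof (ss : seq bitseq) := 2 + 2 * size ss + sumn (map size ss).
Definition M0 k ss := fun x => nth 0 (encode_input k ss) x.
Definition szof (ss : seq bitseq) i := size (nth [::] ss i).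

Lemma nth_flat_pairs (f g : nat -> nat) (l : seq nat) j :
  j < size l ->
  nth 0 (flatten [seq [:: f i; g i] | i <- l]) (2 * j) = f (nth 0 l j) /\
  nth 0 (flatten [seq [:: f i; g i] | i <- l]) (2 * j).+1 = g (nth 0 l j).
Proof.
elim: l j => [|x l IH] [|j] // Hj.
rewrite mulnS add2n /=; apply: IH; by [].
Qed.

Lemma size_flat_pairs (f g : nat -> nat) (l : seq nat) :
  size (flatten [seq [:: f i; g i] | i <- l]) = 2 * size l.
Proof. elim: l => [|x l IH] //=; rewrite IH; lia. Qed.

Lemma nth_flatten_off (ss : seq bitseq) i j :
  i < size ss -> j < size (nth [::] ss i) ->
  nth false (flatten ss) (sumn (take i (map size ss)) + j) = nth false (nth [::] ss i) j.
Proof.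
elim: ss i => [|s ss IH] [|i] //= Hi Hj.
  by rewrite add0n nth_cat Hj.
rewrite nth_cat -addnA ltnNge leq_addr /= addKn.
by apply: IH.
Qed.

Lemma M0_0 k ss : M0 k ss 0 = k. Proof. by []. Qed.
Lemma M0_1 k ss : M0 k ss 1 = size ss. Proof. by []. Qed.

Lemma M0_hdr k ss i : i < size ss ->
  M0 k ss (2 + 2 * i) = Aof ss i /\ M0 k ss (3 + 2 * i) = szof ss i.
Proof.
move=> Hi; rewrite /M0 /encode_input /=.
rewrite !nth_cat !size_flat_pairs size_iota add0n add1n.
have -> : 2 * i < 2 * size ss by lia.
have -> : (2 * i).+1 < 2 * size ss by lia.
have [|H1 H2] := @nth_flat_pairs
  (fun i0 => 2 + 2 * size ss + sumn (map size (take i0 ss)))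
  (fun i0 => size (nth [::] ss i0)) (iota 0 (size ss)) i.
 by rewrite size_iota.
rewrite H1 H2 nth_iota // add0n.
by rewrite /Aof /szof map_take.
Qed.

Lemma M0_bits k ss i j : i < size ss -> j < szof ss i ->
  M0 k ss (Aof ss i + j) = nat_of_bool (nth false (nth [::] ss i) j).
Proof.
move=> Hi Hj; rewrite /M0 /encode_input /Aof /=.
rewrite add0n -addnA nth_cat size_flat_pairs size_iota ltnNge leq_addr /= addKn.
rewrite (nth_map false); first by rewrite nth_flatten_off.
rewrite size_flatten /shape.
have : sumn (take i.+1 (map size ss)) <= sumn (map size ss).
  by rewrite -{2}(cat_take_drop i.+1 (map size ss)) sumn_cat leq_addr.
rewrite (take_nth 0) ?size_map // -cats1 sumn_cat /= (nth_map [::]) //.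
rewrite /szof in Hj; lia.
Qed.

Lemma Aof_succ ss i : i < size ss -> Aof ss i + szof ss i = Aof ss i.+1.
Proof.
move=> Hi; rewrite /Aof /szof (take_nth 0) ?size_map // -cats1 sumn_cat /=.
rewrite (nth_map [::]) //; lia.
Qed.

Lemma Aof_le ss i j : i <= j -> Aof ss i <= Aof ss j.
Proof.
move=> Hij; rewrite /Aof leq_add2l.
rewrite -(subnKC Hij) takeD sumn_cat leq_addr //.
Qed.

Lemma Aof_size ss : Aof ss (size ss) = bof ss.
Proof. by rewrite /Aof /bof -(size_map size) take_size. Qed.

Lemma Aof_ge ss i : 2 + 2 * size ss <= Aof ss i.
Proof. by rewrite /Aof leq_addr. Qed.

Lemma Aof_le_b ss i : i <= size ss -> Aof ss i <= bof ss.
Proof. by move=> H; rewrite -Aof_size Aof_le. Qed.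

Definition P : seq instr := [::
 IConst 14 1; ILoad 7 20; ILoad 4 14; ISub 3 7 14; IJz 4 46;
 IAdd 12 4 4; ILoad 13 12; IAdd 12 12 14; ILoad 12 12; IAdd 1 13 12;
 IAdd 2 1 20; IConst 8 2;
 IJz 4 46; ISub 4 4 14; IAdd 5 5 14; IAdd 6 6 7; ILoad 9 8; IAdd 8 8 14;
 ILoad 10 8; IAdd 8 8 14; IAdd 11 10 20; IAdd 15 9 10;
 IJz 11 12; ISub 11 11 14; ISub 15 15 14; ILoad 12 15; IJz 12 22;
 IAdd 13 11 5; ISub 13 10 13; IJz 13 34; IAdd 13 15 5; ILoad 13 13;
 IAdd 13 13 14; IJmp 35; IAdd 13 14 20; IStore 15 13; ISub 12 3 13;
 IJz 12 39; IJmp 22; IAdd 12 11 14; IStore 2 12; IAdd 2 2 14; IStore 2 6;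
 IAdd 2 2 14; IAdd 0 0 14; IJmp 22; IHalt].

Lemma updE f x v y : upd f x v y = if y == x then v else f y. Proof. by []. Qed.

Ltac rwh := repeat match goal with H : ?R ?n = _ |- context[?R ?n] => is_var R; rewrite H end.
Ltac simp := repeat progress (simpl; rewrite ?updE /=; rwh).

Definition runrel (s : bitseq) m j v :=
  (forall t, t < v -> nth false s (j + t * m)) /\ ~~ nth false s (j + v * m).
Definition good (ss : seq bitseq) k m q :=
  1 <= q /\ forall t, t < k.-1 -> nth false (nth [::] ss m.-1) (q.-1 + t * m).
Definition spec_done ss k m q L :=
  exists m', [/\ 1 <= m', m' <= m, L = k * m' & good ss k m' q].
Definition outOK (M : nat -> nat) b c (Sp : nat -> nat -> Prop) :=
  forall q L, (exists2 i, i < c & M (b + 2 * i) = q /\ M (b + 2 * i + 1) = L) <-> Sp q L.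

Definition regC k ss (R : nat -> nat) :=
  [/\ R 1 = bof ss, R 3 = k.-1, R 7 = k, R 14 = 1 & R 20 = 0].

Definition invO k ss m c (R M : nat -> nat) :=
  [/\ regC k ss R, [/\ R 0 = c, R 2 = bof ss + 2 * c, R 4 = size ss - m, R 5 = m & R 6 = k * m],
      R 8 = 2 + 2 * m, m <= size ss &
   [/\ forall x, x < 2 + 2 * size ss -> M x = M0 k ss x,
       forall x, Aof ss m <= x -> x < bof ss -> M x = M0 k ss x &
       outOK M (bof ss) c (spec_done ss k m)]].

Definition invI k ss i p c (R M : nat -> nat) :=
  [/\ regC k ss R, [/\ R 0 = c, R 2 = bof ss + 2 * c, R 4 = size ss - i.+1, R 5 = i.+1 & R 6 = k * i.+1],
      [/\ R 8 = 2 + 2 * i.+1, i < size ss, R 9 = Aof ss i, R 10 = szof ss i & R 11 = p],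
      [/\ R 15 = Aof ss i + p, p <= szof ss i, 2 <= k &
       forall x, x < 2 + 2 * size ss -> M x = M0 k ss x] &
   [/\ forall x, Aof ss i.+1 <= x -> x < bof ss -> M x = M0 k ss x,
       forall j, j < p -> M (Aof ss i + j) = M0 k ss (Aof ss i + j),
       forall j, p <= j -> j < szof ss i -> runrel (nth [::] ss i) i.+1 j (M (Aof ss i + j)) &
       outOK M (bof ss) c (fun q L => spec_done ss k i q L \/ (L = k * i.+1 /\ p < q /\ good ss k i.+1 q))]].

Lemma inner_exit k ss i c R M : invI k ss i 0 c R M ->
  exists n R' M', n <= 1 /\ iter n (step P) (State 22 R M) = State 12 R' M' /\ invO k ss i.+1 c R' M'.
Proof.
case=> HC [H0 H2 H4 H5 H6] [H8 Hi H9 H10 H11] [H15 Hp Hk Hhd] [Hfu Hcur Hrun Hout].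
exists 1, R, M; split => //; split; first by simp.
split => //; split => //.
move=> q L; rewrite Hout; split.
  case=> [[m' [? ? ? ?]]|[-> [_ ?]]]; [exists m'; split => //; lia | by exists i.+1].
case=> m' [Hm1 Hm2 HL Hg].
case: (ltngtP m' i.+1) => Hm; [left; exists m'; split => //; lia | lia | right].
by subst; split => //; split => //; case: Hg.
Qed.

Lemma inner_b0 k ss i j c R M : invI k ss i j.+1 c R M ->
  nth false (nth [::] ss i) j = false ->
  exists R1, iter 5 (step P) (State 22 R M) = State 22 R1 M /\ invI k ss i j c R1 M.
Proof.
case=> HC [H0 H2 H4 H5 H6] [H8 Hi H9 H10 H11] [H15 Hp Hk Hhd] [Hfu Hcur Hrun Hout] Hb.
have HC' := HC; case: HC' => H1 H3 H7 H14 H20.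
have HM : M (Aof ss i + j) = 0 by rewrite Hcur // M0_bits // Hb.
have E : Aof ss i + j.+1 - 1 = Aof ss i + j by lia.
eexists; split. { simp. rewrite E HM. simp. reflexivity. }
split.
- by split; simp.
- by split; simp => //; lia.
- by split; simp => //; lia.
- by split; simp => //; try lia; exact: Hhd.
split; simp.
- exact: Hfu.
- by move=> j' Hj'; apply: Hcur; lia.
- move=> j' Hj' Hj2; case: (ltngtP j' j) => Hjj; [lia | by apply: Hrun | subst].
  by rewrite HM; split => [?|]; rewrite /= ?mul0n ?addn0 ?Hb.
move=> q L; rewrite Hout; split.
  case=> [?|[HL [Hq Hg]]]; [by left|right; split => //; split => //; lia].
case=> [?|[HL [Hq Hg]]]; [by left|right; split => //; split => //].
case: (ltngtP q j.+1) => Hqj; [lia|done|subst].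
case: Hg => _ /(_ 0); rewrite mul0n addn0 /= Hb; lia.
Qed.

Ltac ifs := repeat (case: eqP => [?|?]; [try (exfalso; lia)|try (exfalso; lia)]).

Lemma updN f x v y : y <> x -> upd f x v y = f y.
Proof. by rewrite updE => /eqP/negbTE ->. Qed.
Lemma updS f x v : upd f x v x = v.
Proof. by rewrite updE eqxx. Qed.

Lemma outOK_store M b c Sp a v : a < b -> outOK M b c Sp -> outOK (upd M a v) b c Sp.
Proof.
move=> Ha H q L; rewrite -H; split; case=> i' Hi' [E1 E2]; exists i' => //;
  move: E1 E2; rewrite !updN //; lia.
Qed.

Lemma outOK_add M b c Sp q0 L0 :
  outOK M b c Sp ->
  outOK (upd (upd M (b + 2 * c) q0) (b + 2 * c + 1) L0) b c.+1
     (fun q L => Sp q L \/ (q = q0 /\ L = L0)).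
Proof.
move=> H q L; rewrite -H; split.
- case=> i' Hi' [E1 E2]; move: E1 E2.
  case: (ltngtP i' c) => Hic; [|lia|subst].
  + rewrite !updN; try lia; move=> E1 E2; left; by exists i'.
  + rewrite updS updN ?updS; try lia; move=> E1 E2; by right.
- case=> [[i' Hi' [E1 E2]]|[-> ->]].
  + exists i'; first lia; rewrite !updN //; lia.
  + exists c => //; rewrite updS updN ?updS //; lia.
Qed.

Lemma outOK_ext M b c (Sp Sp' : nat -> nat -> Prop) :
  (forall q L, Sp q L <-> Sp' q L) -> outOK M b c Sp -> outOK M b c Sp'.
Proof. by move=> E H q L; rewrite H E. Qed.

Lemma runrel_good (s : bitseq) m j v K : runrel s m j v ->
  (K <= v <-> forall t, t < K -> nth false s (j + t * m)).
Proof.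
case=> H1 H2; split => [HK t Ht|H]; first by apply: H1; lia.
case: (leqP K v) => // Hv; by rewrite H in H2.
Qed.

Lemma good_run k ss i j v : runrel (nth [::] ss i) i.+1 j v ->
  (good ss k i.+1 j.+1 <-> k.-1 <= v).
Proof.
move=> Hr; rewrite (runrel_good k.-1 Hr) /good /=; split; [by case|by split].
Qed.

Lemma inner_tail k ss i j c v R M :
  regC k ss R -> R 0 = c -> R 2 = bof ss + 2 * c -> R 4 = size ss - i.+1 -> R 5 = i.+1 ->
  R 6 = k * i.+1 -> R 8 = 2 + 2 * i.+1 -> i < size ss -> R 9 = Aof ss i -> R 10 = szof ss i ->
  R 11 = j -> R 15 = Aof ss i + j -> j < szof ss i -> 2 <= k ->
  (forall x, x < 2 + 2 * size ss -> M x = M0 k ss x) ->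
  (forall x, Aof ss i.+1 <= x -> x < bof ss -> M x = M0 k ss x) ->
  (forall j', j' < j -> M (Aof ss i + j') = M0 k ss (Aof ss i + j')) ->
  (forall j', j < j' -> j' < szof ss i -> runrel (nth [::] ss i) i.+1 j' (M (Aof ss i + j'))) ->
  outOK M (bof ss) c (fun q L => spec_done ss k i q L \/ (L = k * i.+1 /\ j.+1 < q /\ good ss k i.+1 q)) ->
  R 13 = v -> runrel (nth [::] ss i) i.+1 j v ->
  exists n c1 R1 M1, n <= 10 /\ iter n (step P) (State 35 R M) = State 22 R1 M1 /\
     invI k ss i j c1 R1 M1.
Proof.
move=> HC H0 H2 H4 H5 H6 H8 Hi H9 H10 H11 H15 Hj Hk Hhd Hfu Hcur Hrun Hout H13 Hv.
have [H1 H3 H7 H14 H20] := HC.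
have hA := Aof_ge ss i.
have hAb := Aof_succ Hi.
have hb : Aof ss i.+1 <= bof ss by apply: Aof_le_b.
have HG := good_run k Hv.
have Hab : Aof ss i + j < bof ss by rewrite /szof in hAb Hj; lia.
case: (leqP k.-1 v) => Hkv.
- have Hz : k.-1 - v = 0 by lia.
  exists 10, c.+1; eexists; eexists; split => //; split.
    simp; rewrite Hz; simp; reflexivity.
  split.
  + by split; simp.
  + by split; simp => //; lia.
  + by split; simp.
  + split; simp => //; try lia; move=> x Hx; rewrite !updN; try lia; exact: Hhd.
  split.
  + move=> x Hx1 Hx2; rewrite !updN; try lia; exact: Hfu.
  + move=> x Hx; rewrite !updN; try lia; exact: Hcur.
  + move=> x Hx1 Hx2; case: (ltngtP x j) => Hxj; [lia| |].
    * rewrite !updN; try lia; exact: Hrun.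
    * rewrite updN; last lia. rewrite updN; last lia. by rewrite Hxj updS.
  apply: outOK_ext; last first.
    by apply: outOK_add; exact: outOK_store Hab Hout.
  move=> q L; split.
  * case=> [[?|[HL [Hq Hg]]]|[-> ->]]; [by left| | right; rewrite addn1; split => //; split => //; exact/HG].
    right; split => //; split => //; lia.
  * case=> [?|[HL [Hq Hg]]]; [by left; left|].
    case: (ltngtP q j.+1) => Hqj; [lia|by left; right|right; split => //; lia].
- have Hz : k.-1 - v = (k.-1 - v).-1.+1 by lia.
  exists 4, c; eexists; eexists; split => //; split.
    simp; rewrite Hz; simp; reflexivity.
  split.
  + by split; simp.
  + by split; simp => //; lia.
  + by split; simp.
  + split; simp => //; try lia; move=> x Hx; rewrite !updN; try lia; exact: Hhd.
  split.
  + move=> x Hx1 Hx2; rewrite !updN; try lia; exact: Hfu.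
  + move=> x Hx; rewrite !updN; try lia; exact: Hcur.
  + move=> x Hx1 Hx2; case: (ltngtP x j) => Hxj; [lia| |].
    * rewrite !updN; try lia; exact: Hrun.
    * by rewrite Hxj updS.
  apply: outOK_ext; last by exact: outOK_store Hab Hout.
  move=> q L; split.
  * case=> [?|[HL [Hq Hg]]]; [by left|right; split => //; split => //; lia].
  * case=> [?|[HL [Hq Hg]]]; [by left|].
    case: (ltngtP q j.+1) => Hqj; [lia|by right|subst].
    move/HG: Hg; lia.
Qed.

Definition Qin k ss i j st := pc st = 22 /\ exists c1, invI k ss i j c1 (reg st) (Defs.mem st).

Lemma compose n1 st N (Q : state -> Prop) :
  (exists n, n <= N /\ Q (iter n (step P) (iter n1 (step P) st))) ->
  exists n, n <= N + n1 /\ Q (iter n (step P) st).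
Proof. case=> n [Hn HQ]; exists (n + n1); rewrite iterD leq_add2r; by split. Qed.

Lemma weaken N N' st (Q : state -> Prop) : N <= N' ->
  (exists n, n <= N /\ Q (iter n (step P) st)) -> exists n, n <= N' /\ Q (iter n (step P) st).
Proof. move=> H [n [Hn HQ]]; exists n; split => //; exact: leq_trans H. Qed.

Lemma runrel_step (s : bitseq) m j v : nth false s j -> runrel s m (j + m) v -> runrel s m j v.+1.
Proof.
move=> Hj [H1 H2]; split.
  by case=> [_|t Ht]; rewrite ?mul0n ?addn0 // mulSn addnA; apply: H1.
by rewrite mulSn addnA.
Qed.

Lemma runrel_edge (s : bitseq) m j : nth false s j -> size s <= j + m -> runrel s m j 1.
Proof.
move=> Hj Hs; split; first by case=> // _; rewrite mul0n addn0.
by rewrite mul1n nth_default.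
Qed.

Lemma tailQ k ss i j c v R M :
  regC k ss R -> R 0 = c -> R 2 = bof ss + 2 * c -> R 4 = size ss - i.+1 -> R 5 = i.+1 ->
  R 6 = k * i.+1 -> R 8 = 2 + 2 * i.+1 -> i < size ss -> R 9 = Aof ss i -> R 10 = szof ss i ->
  R 11 = j -> R 15 = Aof ss i + j -> j < szof ss i -> 2 <= k ->
  (forall x, x < 2 + 2 * size ss -> M x = M0 k ss x) ->
  (forall x, Aof ss i.+1 <= x -> x < bof ss -> M x = M0 k ss x) ->
  (forall j', j' < j -> M (Aof ss i + j') = M0 k ss (Aof ss i + j')) ->
  (forall j', j < j' -> j' < szof ss i -> runrel (nth [::] ss i) i.+1 j' (M (Aof ss i + j'))) ->
  outOK M (bof ss) c (fun q L => spec_done ss k i q L \/ (L = k * i.+1 /\ j.+1 < q /\ good ss k i.+1 q)) ->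
  R 13 = v -> runrel (nth [::] ss i) i.+1 j v ->
  exists n, n <= 10 /\ Qin k ss i j (iter n (step P) (State 35 R M)).
Proof.
move=> *; have [n [c1 [R1 [M1 [Hn [E Hinv]]]]]] := inner_tail (v := v) (R := R) (M := M) (j := j) (c := c) (i := i) (k := k) (ss := ss) ltac:(eassumption) ltac:(eassumption) ltac:(eassumption) ltac:(eassumption) ltac:(eassumption) ltac:(eassumption) ltac:(eassumption) ltac:(eassumption) ltac:(eassumption) ltac:(eassumption) ltac:(eassumption) ltac:(eassumption) ltac:(eassumption) ltac:(eassumption) ltac:(eassumption) ltac:(eassumption) ltac:(eassumption) ltac:(eassumption) ltac:(eassumption) ltac:(eassumption) ltac:(eassumption).
exists n; split => //; rewrite E; split => //; by exists c1.
Qed.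

Lemma inner_b1 k ss i j c R M : invI k ss i j.+1 c R M ->
  nth false (nth [::] ss i) j = true ->
  exists n, n <= 22 /\ Qin k ss i j (iter n (step P) (State 22 R M)).
Proof.
case=> HC [H0 H2 H4 H5 H6] [H8 Hi H9 H10 H11] [H15 Hp Hk Hhd] [Hfu Hcur Hrun Hout] Hb.
have HC' := HC; case: HC' => H1 H3 H7 H14 H20.
have HM : M (Aof ss i + j) = 1 by rewrite Hcur // M0_bits // Hb.
have E : Aof ss i + j.+1 - 1 = Aof ss i + j by lia.
have Ej : j.+1 - 1 = j by lia.
case: (leqP (szof ss i) (j + i.+1)) => Hedge.
- have hE : szof ss i - (j + i.+1) = 0 by lia.
  apply: (@weaken (10 + 9)) => //; apply: compose.
  simp; rewrite E Ej HM; simp; rewrite hE; simp.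
  apply: tailQ; simp => //; try lia.
  + move=> j' Hj'; apply: Hcur; lia.
  + rewrite addn0; apply: runrel_edge => //; rewrite /szof in Hedge; lia.
- have hE : szof ss i - (j + i.+1) = (szof ss i - (j + i.+1)).-1.+1 by lia.
  have Ea : Aof ss i + j + i.+1 = Aof ss i + (j + i.+1) by rewrite addnA.
  have Hr := Hrun (j + i.+1) ltac:(lia) Hedge.
  apply: (@weaken (10 + 12)) => //; apply: compose.
  simp; rewrite E Ej HM; simp; rewrite hE; simp; rewrite Ea.
  apply: tailQ; simp => //; try lia.
  + move=> j' Hj'; apply: Hcur; lia.
  + rewrite addn1; apply: runrel_step => //; rewrite -addnA.
Qed.

Definition QO k ss m st := pc st = 12 /\ exists c1, invO k ss m c1 (reg st) (Defs.mem st).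

Lemma state_eta st : st = State (pc st) (reg st) (Defs.mem st).
Proof. by case: st. Qed.

Lemma inner_loop k ss i p : forall c R M, invI k ss i p c R M ->
  exists n, n <= 22 * p + 1 /\ QO k ss i.+1 (iter n (step P) (State 22 R M)).
Proof.
elim: p => [|j IH] c R M Hinv.
  have [n [R' [M' [Hn [E Ho]]]]] := inner_exit Hinv.
  exists n; split => //; rewrite E; split => //; by exists c.
case Hb: (nth false (nth [::] ss i) j).
- have [n [Hn [Hpc [c1 Hinv1]]]] := inner_b1 Hinv Hb.
  apply: (@weaken (22 * j + 1 + n)); first lia.
  apply: compose; move: Hpc Hinv1; case: (iter n (step P) (State 22 R M)) => pc1 R1 M1 /= -> Hinv1; exact: IH Hinv1.
- have [R1 [E1 Hinv1]] := inner_b0 Hinv Hb.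
  apply: (@weaken (22 * j + 1 + 5)); first lia.
  apply: compose; rewrite E1; exact: IH Hinv1.
Qed.

Lemma good_le ss k m q : 2 <= k -> good ss k m.+1 q -> q <= szof ss m.
Proof.
move=> Hk [Hq /(_ 0)]; rewrite mul0n addn0 /szof => H.
have := H ltac:(lia); case: (ltnP q.-1 (size (nth [::] ss m))) => Hs; first lia.
by rewrite nth_default.
Qed.

Lemma outer_step k ss m c R M : invO k ss m c R M -> m < size ss -> 2 <= k ->
  exists n, n <= 10 /\ Qin k ss m (szof ss m) (iter n (step P) (State 12 R M)).
Proof.
case=> HC [H0 H2 H4 H5 H6] H8 Hm [Hhd Hfu Hout] Hms Hk.
have HC' := HC; case: HC' => H1 H3 H7 H14 H20.
have [Ha Hl] := M0_hdr k Hms.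
have HM8 : M (2 + 2 * m) = Aof ss m by rewrite Hhd //; lia.
have HM9 : M (2 + 2 * m + 1) = szof ss m by rewrite Hhd; [rewrite -Hl; congr M0; lia|lia].
have Hz : size ss - m = (size ss - m).-1.+1 by lia.
have hA := Aof_ge ss m.
have hAb := Aof_succ Hms.
have hb : Aof ss m.+1 <= bof ss by apply: Aof_le_b.
exists 10; split => //.
simp; rewrite Hz; simp.
split => //; exists c; split.
- by split; simp.
- split; simp => //; try lia; rewrite mulnS; lia.
- split; simp => //; lia.
- split; simp => //; lia.
split.
- move=> x Hx1 Hx2; apply: Hfu => //; lia.
- move=> x Hx; apply: Hfu; lia.
- move=> x Hx1 Hx2; lia.
move=> q L; rewrite Hout; split; first by left.
case=> // [[HL [Hq Hg]]]; have := good_le Hk Hg; lia.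
Qed.

Definition QF k ss st := pc st = 46 /\ exists c1, invO k ss (size ss) c1 (reg st) (Defs.mem st).

Lemma outer_loop k ss : 2 <= k -> (forall i, i < size ss -> 0 < szof ss i) ->
  forall d m c R M, size ss - m = d -> invO k ss m c R M ->
  exists n, n <= 33 * sumn (drop m (map size ss)) + 1 /\ QF k ss (iter n (step P) (State 12 R M)).
Proof.
move=> Hk Hsz; elim=> [|d IH] m c R M Hd Hinv.
  have Hm : m = size ss by case: Hinv => _ _ _ Hm _; lia.
  case: (Hinv) => HC [H0 H2 H4 H5 H6] H8 _ _.
  exists 1; split; first lia.
  subst m; rewrite subnn in H4; simp; split => //; by exists c.
have Hms : m < size ss by lia.
have [n1 [Hn1 [Hpc1 [c1 Hinv1]]]] := outer_step Hinv Hms Hk.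
have [n2 [Hn2 [Hpc2 [c2 Hinv2]]]] := inner_loop Hinv1.
have [n3 [Hn3 HQ]] := IH m.+1 c2 (reg (iter n2 (step P) (State 22 (reg (iter n1 (step P) (State 12 R M))) (Defs.mem (iter n1 (step P) (State 12 R M)))))) (Defs.mem (iter n2 (step P) (State 22 (reg (iter n1 (step P) (State 12 R M))) (Defs.mem (iter n1 (step P) (State 12 R M)))))) ltac:(lia) Hinv2.
have Hs := Hsz m Hms.
have Hdrop : sumn (drop m (map size ss)) = szof ss m + sumn (drop m.+1 (map size ss)).
  by rewrite (drop_nth 0) ?size_map //= (nth_map [::]).
exists (n3 + n2 + n1); split; first by rewrite Hdrop; lia.
rewrite !iterD; move: Hpc1 Hpc2 HQ.
set st1 := iter n1 _ _; rewrite (state_eta st1) => ->.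
set st2 := iter n2 _ _; rewrite (state_eta st2) => ->.
done.
Qed.

Lemma halted_fix st : halted P st -> step P st = st.
Proof. by case: st => c R M; rewrite /halted /=; case: (fetch P _). Qed.

Lemma iter_halted n st : halted P st -> iter n (step P) st = st.
Proof. move=> H; elim: n => //= n ->; exact: halted_fix. Qed.

Lemma run_iter n T st : n <= T -> halted P (iter n (step P) st) ->
  run P T st = Some (iter n (step P) st).
Proof.
elim: n T st => [|n IH] T st Hn Hh.
  by case: T Hn => [|T] _ /=; rewrite Hh.
case: T Hn => [|T] // Hn.
rewrite /= -iterS iterSr; case Hs: (halted P st).
  by rewrite -iterSr iter_halted.
apply: IH => //; by rewrite -iterSr.
Qed.

Lemma init_eq input : init_state input = State 0 (fun _ => 0) (fun a => nth 0 input a).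
Proof. by []. Qed.

Lemma outputE st c :
  reg st 0 = c ->
  forall p L, (p, L) \in output st <->
   (exists2 i, i < c & Defs.mem st (reg st 1 + 2 * i) = p /\ Defs.mem st (reg st 1 + 2 * i + 1) = L).
Proof.
move=> Hc p L; rewrite /output Hc; split.
  by case/mapP=> j; rewrite mem_iota add0n => /andP[_ Hj] [-> ->]; exists j.
case=> j Hj [<- <-]; apply/mapP; exists j => //; by rewrite mem_iota.
Qed.

Arguments M0 : simpl never.

Lemma machine k ss : 2 <= k -> (forall i, i < size ss -> 0 < szof ss i) ->
  exists st', run P (50 * (sumn (map size ss) + 1)) (init_state (encode_input k ss)) = Some st' /\
   forall p L, (p, L) \in output st' <-> spec_done ss k (size ss) p L.
Proof.
move=> Hk Hsz.
rewrite init_eq -/(M0 k ss).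
case Hh: (size ss) => [|h'].
- exists (iter 5 (step P) (State 0 (fun _ => 0) (M0 k ss))); split.
    apply: run_iter; first lia.
    simp; rewrite M0_1 Hh; simp; done.
  move=> p L; rewrite (@outputE _ 0); last by simp.
  split; first by case.
  by case=> m' [? ? _ _]; lia.
have Hhs : h' < size ss by lia.
have [Ha Hl] := M0_hdr k Hhs.
have E1 : M0 k ss (h'.+1 + h'.+1) = Aof ss h' by rewrite -Ha; congr M0; lia.
have E2 : M0 k ss (h'.+1 + h'.+1 + 1) = szof ss h' by rewrite -Hl; congr M0; lia.
have Eb : Aof ss h' + szof ss h' = bof ss by rewrite Aof_succ // -Hh Aof_size.
have [n [Hn [Hpc [c1 Hinv]]]] : exists n, n <= 33 * sumn (drop 0 (map size ss)) + 1 /\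
    QF k ss (iter n (step P) (iter 12 (step P) (State 0 (fun _ => 0) (M0 k ss)))).
  simp; rewrite M0_1 Hh; simp; rewrite M0_0 E1 E2 Eb.
  apply: (outer_loop Hk Hsz (d := size ss - 0)) => //.
  split.
  - split; simp => //; lia.
  - split; simp => //; rewrite ?Hh; lia.
  - by simp.
  - by [].
  split => // q L; split; first by case.
  by case=> m' [? ? _ _]; lia.
have [HC [H0 _ _ _ _] _ _ [_ _ Hout]] := Hinv.
exists (iter (n + 12) (step P) (State 0 (fun _ => 0) (M0 k ss))); split.
  apply: run_iter; first by rewrite drop0 in Hn; lia.
  by rewrite iterD (state_eta (iter n _ _)) Hpc.
move=> p L; rewrite iterD (outputE H0); case: HC => -> _ _ _ _; rewrite Hh in Hout; exact: Hout.
Qed.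


Lemma phi_nil (S : Type) (phi : seq S -> seq S) : antimorphic_involution phi -> phi [::] = [::].
Proof.
case=> Ha Hi; have := Ha [::] [::]; rewrite cat0s => E.
have : size (phi [::]) = size (phi [::]) + size (phi [::]) by rewrite -size_cat -E.
by case: (phi [::]) => //= a l; lia.
Qed.

Lemma phi_size_ge (S : Type) (phi : seq S -> seq S) : antimorphic_involution phi ->
  forall u, size u <= size (phi u).
Proof.
move=> H; have [Ha Hi] := H; elim=> [|a u IH] //.
rewrite -cat1s Ha size_cat /=.
have : size (phi [:: a]) != 0.
  apply/eqP => /size0nil E; have := Hi [:: a]; by rewrite E phi_nil.
rewrite size_cat; lia.
Qed.

Lemma phi_size (S : Type) (phi : seq S -> seq S) : antimorphic_involution phi ->
  forall u, size (phi u) = size u.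
Proof.
move=> H u; have [Ha Hi] := H; apply/eqP; rewrite eqn_leq phi_size_ge // andbT.
by rewrite -{2}(Hi u) phi_size_ge.
Qed.

Lemma psq_iff (S : eqType) (phi : seq S -> seq S) u v : antimorphic_involution phi ->
  size u = size v -> 0 < size u ->
  (pseudo_square phi (u ++ v) <-> u = v \/ u = phi v).
Proof.
move=> H Huv Hu; have [Ha Hi] := H; split.
- case=> _ [us [Hs [Hf Hp]]]; case: us Hs Hf Hp => [|a [|b [|? ?]]] // _ Hf Hp.
  have Hab : size a = size b by case: (Hp 0 1 erefl erefl) => /= ->; rewrite ?phi_size.
  have Hs2 := congr1 size Hf; rewrite /= !size_cat /= in Hs2.
  move: Hf; rewrite /= cats0 => /eqP; rewrite eqseq_cat; last lia.
  case/andP => /eqP <- /eqP <-; exact: Hp 0 1 erefl erefl.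
- move=> Hc; split; first by case: u Hu {Huv Hc}.
  exists [:: u; v]; split => //; split; first by rewrite /= cats0.
  case=> [|[|//]] [|[|//]] //= _ _; try by left.
  case: Hc => ->; [by left|right; by rewrite Hi].
Qed.

Definition blk (S : Type) (x : seq S) m t := take m (drop (t * m) x).

Lemma blkS (S : Type) (x : seq S) m t : blk x m t.+1 = blk (drop m x) m t.
Proof. by rewrite /blk drop_drop mulSn addnC. Qed.

Lemma flatten_blk (S : Type) m k : forall (x : seq S), size x = k * m ->
  flatten [seq blk x m t | t <- iota 0 k] = x.
Proof.
elim: k => [|k IH] x Hx.
  by rewrite mul0n in Hx; move/size0nil: Hx ->.
have E : iota 1 k = [seq 1 + i | i <- iota 0 k] by rewrite -iotaDl.
rewrite /= E -map_comp.
rewrite (@eq_map _ _ _ (fun t => blk (drop m x) m t)); last by move=> t /=; rewrite add1n blkS.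
rewrite IH; last by rewrite size_drop Hx mulSn; lia.
by rewrite /blk mul0n drop0 cat_take_drop.
Qed.

Lemma blk2 (S : Type) (x : seq S) m t : take (2 * m) (drop (t * m) x) = blk x m t ++ blk x m t.+1.
Proof. by rewrite mul2n -addnn takeD /blk drop_drop mulSn. Qed.

Lemma blk_flatten (S : eqType) m (us : seq (seq S)) :
  (forall u, u \in us -> size u = m) -> forall t, blk (flatten us) m t = nth [::] us t.
Proof.
elim: us => [|u us IH] Hs t.
  by rewrite /blk /=; case: t.
case: t => [|t].
  by rewrite /blk mul0n drop0 /= take_size_cat // Hs ?mem_head.
rewrite blkS /= drop_size_cat ?Hs ?mem_head //.
by apply: IH => u' Hu'; apply: Hs; rewrite in_cons Hu' orbT.
Qed.

Lemma size_flatten_const (S : eqType) m (us : seq (seq S)) :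
  (forall u, u \in us -> size u = m) -> size (flatten us) = size us * m.
Proof.
elim: us => [|u us IH] Hs //=.
rewrite size_cat IH ?Hs ?mem_head ?mulSn // => u' Hu'.
by apply: Hs; rewrite in_cons Hu' orbT.
Qed.

Lemma pp_iff (S : eqType) (phi : seq S -> seq S) k x : antimorphic_involution phi -> 2 <= k ->
  pseudo_power phi k x <->
  exists m, [/\ 0 < m, size x = k * m &
    forall t, t < k.-1 -> pseudo_square phi (take (2 * m) (drop (t * m) x))].
Proof.
move=> H Hk; have [Ha Hi] := H; split.
- case=> Hne [us [Hs [Hf Hp]]].
  set m := size (nth [::] us 0).
  have Hsz : forall u, u \in us -> size u = m.
    move=> u Hu; have Hix : index u us < k by rewrite -Hs index_mem.
    have := Hp _ 0 Hix ltac:(lia); rewrite nth_index //.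
    by case=> ->; rewrite ?phi_size.
  have Hsx : size x = k * m by rewrite -Hf (size_flatten_const Hsz) Hs mulnC.
  have Hm : 0 < m.
    case: (posnP m) => // Hm0; exfalso; apply: Hne.
    by apply/size0nil; rewrite Hsx Hm0 muln0.
  exists m; split => // t Ht.
  rewrite blk2 -Hf !(blk_flatten Hsz).
  have Ht1 : t < k by lia.
  have Ht2 : t.+1 < k by lia.
  have Hn1 : size (nth [::] us t) = m by apply: Hsz; rewrite mem_nth ?Hs.
  have Hn2 : size (nth [::] us t.+1) = m by apply: Hsz; rewrite mem_nth ?Hs.
  apply/psq_iff => //; [by rewrite Hn1 Hn2|by rewrite Hn1|exact: Hp].
- case=> m [Hm Hsx Hps].
  have Hsb : forall t, t < k -> size (blk x m t) = m.
    move=> t Ht; rewrite /blk size_take size_drop Hsx.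
    have : m + t * m <= k * m by rewrite -mulSn leq_mul2r Ht orbT.
    case: ltnP => //; lia.
  have Hcons : forall t, t < k.-1 -> blk x m t = blk x m t.+1 \/ blk x m t = phi (blk x m t.+1).
    move=> t Ht; apply/psq_iff => //; [rewrite !Hsb //; lia|rewrite Hsb //; lia|].
    by rewrite -blk2; apply: Hps.
  have H0 : forall t, t < k -> blk x m t = blk x m 0 \/ blk x m t = phi (blk x m 0).
    elim=> [|t IH] Ht; first by left.
    have := Hcons t ltac:(lia); have := IH ltac:(lia).
    case=> E1; case=> E2.
    + by left; rewrite -E1 -E2.
    + right; by rewrite -E1 E2 Hi.
    + by right; rewrite -E1 -E2.
    + by left; rewrite -(Hi (blk x m 0)) -E1 E2 Hi.
  split.
    move=> E; move: Hsx; rewrite E /=; lia.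
  exists [seq blk x m t | t <- iota 0 k]; split; first by rewrite size_map size_iota.
  split; first by apply: flatten_blk.
  move=> i j Hi' Hj'; rewrite !(nth_map 0) ?size_iota // !nth_iota // !add0n.
  case: (H0 i Hi') => ->; case: (H0 j Hj') => ->.
  + by left.
  + by right; rewrite Hi.
  + by right.
  + by left.
Qed.

Lemma bool_ofP (P : Prop) : bool_of P = true <-> P.
Proof. by rewrite /bool_of; case: excluded_middle_informative. Qed.

Lemma size_all_s (S : eqType) (phi : seq S -> seq S) w : size (all_s phi w) = (size w)./2.
Proof. by rewrite /all_s size_map size_iota. Qed.

Lemma nth_all_s (S : eqType) (phi : seq S -> seq S) w m : 1 <= m -> m <= (size w)./2 ->
  nth [::] (all_s phi w) m.-1 = s_of phi w m.
Proof.
move=> H1 H2; rewrite /all_s (nth_map 0) ?size_iota; last lia.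
by rewrite nth_iota; [congr s_of; lia|lia].
Qed.

Lemma nth_s_of (S : eqType) (phi : seq S -> seq S) w m j :
  nth false (s_of phi w m) j =
  (j < size w - 2 * m + 1) && bool_of (pseudo_square phi (factor w j.+1 (j.+1 + 2 * m - 1))).
Proof.
rewrite /s_of; case: ltnP => H /=.
  by rewrite (nth_map 0) ?size_iota // nth_iota // add1n.
by rewrite nth_default // size_map size_iota.
Qed.

Lemma factor_sub (S : Type) (w : seq S) p L t m : 1 <= p -> t * m + 2 * m <= L ->
  factor w (p + t * m) (p + t * m + 2 * m - 1) = take (2 * m) (drop (t * m) (factor w p (p + L - 1))).
Proof.
move=> Hp HL; rewrite /factor.
have HtL : t * m <= (p + L - 1).+1 - p by lia.
rewrite -(subnK HtL) -take_drop take_takel; last lia.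
rewrite drop_drop; congr (take _ (drop _ _)); lia.
Qed.

Lemma size_factor (S : Type) (w : seq S) p L : 1 <= p -> p + L - 1 <= size w ->
  size (factor w p (p + L - 1)) = L.
Proof. move=> Hp HL; rewrite /factor size_take size_drop; case: ltnP; lia. Qed.

Lemma spec_occ (S : finType) (phi : seq S -> seq S) w k : antimorphic_involution phi -> 2 <= k ->
  forall p L, spec_done (all_s phi w) k (size (all_s phi w)) p L <-> pseudo_power_occ phi k w p L.
Proof.
move=> H Hk p L; rewrite size_all_s; split.
- case=> m [Hm1 Hm2 HL [Hp Hg]].
  have Hkm : k * m = k.-2 * m + 2 * m by rewrite -mulnDl; congr (_ * _); lia.
  have Hlast := Hg k.-2 ltac:(lia).
  rewrite nth_all_s // nth_s_of in Hlast; case/andP: Hlast => Hlt _.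
  have HpL : p + L - 1 <= size w by rewrite HL; lia.
  split => //; first (rewrite HL; have : 0 < k * m by rewrite muln_gt0; lia); first lia.
  apply/(@pp_iff _ phi k _ H Hk); exists m; split => //; first by rewrite size_factor.
  move=> t Ht; have := Hg t Ht; rewrite nth_all_s // nth_s_of => /andP[Hlt2 /bool_ofP].
  have Htm : t * m + 2 * m <= k * m by rewrite -mulnDl leq_mul2r; apply/orP; right; lia.
  rewrite -factor_sub //; last lia.
  have -> : (p.-1 + t * m).+1 = p + t * m by lia.
  done.
- case=> Hp HL1 HpL /(@pp_iff _ phi k _ H Hk) [m [Hm Hsx Hps]].
  rewrite size_factor // in Hsx.
  have H2m : 2 * m <= k * m by rewrite leq_mul2r Hk orbT.
  exists m; split => //; first lia.
  split => // t Ht.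
  have Htm : t * m + 2 * m <= k * m by rewrite -mulnDl leq_mul2r; apply/orP; right; lia.
  rewrite nth_all_s //; last lia.
  rewrite nth_s_of; apply/andP; split; first lia.
  apply/bool_ofP.
  have -> : (p.-1 + t * m).+1 = p + t * m by lia.
  rewrite (@factor_sub _ _ _ L) //; last lia.
  exact: Hps.
Qed.


Theorem mainTheorem15 :
  exists (P : seq instr) (c : nat),
  forall (S : finType) (phi : seq S -> seq S) (w : seq S) (k : nat),
    antimorphic_involution phi -> 2 <= k ->
    exists st' : state,
      run P (c * (sumn (map size (all_s phi w)) + 1))
            (init_state (encode_input k (all_s phi w))) = Some st' /\
      (forall p L : nat,
         (p, L) \in output st' <-> pseudo_power_occ phi k w p L).
Proof.
exists P, 50 => S phi w k H Hk.
have Hsz : forall i, i < size (all_s phi w) -> 0 < szof (all_s phi w) i.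
  move=> i Hi; rewrite size_all_s in Hi; rewrite /szof.
  have -> : nth [::] (all_s phi w) i = s_of phi w i.+1 by apply: (@nth_all_s _ phi w i.+1); lia.
  by rewrite /s_of size_map size_iota addn1.
have [st' [Hrun Hout]] := machine Hk Hsz.
exists st'; split => // p L; rewrite Hout; exact: spec_occ.
Qed.
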